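(* Let $n\in\mathbb{N}$, and let $\mathcal{H}\in C^1(\mathbb{R}^{n},\mathbb{R})$, $E\in C(\mathbb{R}^{n},\mathbb{R}^{n,n})$ and $z\in C(\mathbb{R}^{n},\mathbb{R}^{n})$ satisfy $E(x)^\top z(x)=\nabla\mathcal{H}(x)$ for all $x\in\mathbb{R}^n$. Assume further that $E(x)$ is symmetric and positive definite for every $x\in\mathbb{R}^n$. Define $\overline{E}\colon\mathbb{R}^n\times\mathbb{R}^n\to\mathbb{R}^{n,n}$ and $\overline{z}\colon\mathbb{R}^n\times\mathbb{R}^n\to\mathbb{R}^n$ by $$\overline{E}(x,\hat x):=E\!\left(\tfrac{\hat x+x}{2}\right),$$ $$\overline{z}(x,\hat x):=\begin{cases} z\!\left(\tfrac{\hat x+x}{2}\right)+\dfrac{\mathcal{H}(\hat x)-\mathcal{H}(x)-z\!\left(\tfrac{\hat x+x}{2}\right)^\top\overline{E}(x,\hat x)(\hat x-x)}{(\hat x-x)^\top\overline{E}(x,\hat x)(\hat x-x)}\,(\hat x-x), & \text{if } \hat x\neq x,\\[2mm] z(x), & \text{otherwise}.\end{cases}$$ Then $(\overline{E},\overline{z})$ is a discrete gradient pair for $(\mathcal{H},E,z)$.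
   Context: Let $\mathcal{H}\in C^1(\mathbb{R}^n,\mathbb{R})$, $E\in C(\mathbb{R}^n,\mathbb{R}^{n,n})$ and $z\in C(\mathbb{R}^n,\mathbb{R}^n)$ satisfy $\nabla\mathcal{H}(x)=E(x)^\top z(x)$ for all $x\in\mathbb{R}^n$. A pair $(\overline{E},\overline{z})\in C(\mathbb{R}^n\times\mathbb{R}^n,\mathbb{R}^{n,n})\times C(\mathbb{R}^n\times\mathbb{R}^n,\mathbb{R}^n)$ (i.e. both maps continuous) is called a discrete gradient pair for $(\mathcal{H},E,z)$ if (i) $\overline{E}(x,x)=E(x)$ for all $x\in\mathbb{R}^n$; (ii) $\overline{z}(x,x)=z(x)$ for all $x\in\mathbb{R}^n$; (iii) $\overline{z}(x,\hat x)^\top\overline{E}(x,\hat x)(\hat x-x)=\mathcal{H}(\hat x)-\mathcal{H}(x)$ for all $(x,\hat x)\in\mathbb{R}^n\times\mathbb{R}^n$. *)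

(* Defs.v *)
From HB Require Import structures.
From mathcomp Require Import all_boot all_order all_algebra.
From mathcomp Require Import all_classical all_reals all_analysis.
Set Implicit Arguments. Unset Strict Implicit. Unset Printing Implicit Defensive.
Import Order.TTheory GRing.Theory Num.Theory.
Import numFieldNormedType.Exports.
Local Open Scope ring_scope.

Definition grad (R : realType) (n : nat) (H : 'cV[R]_n -> R) (x : 'cV[R]_n)
  : 'cV[R]_n := \col_i ('d H x (delta_mx i 0)).

Definition C1 (R : realType) (n : nat) (H : 'cV[R]_n -> R) : Prop :=
  (forall x, differentiable H x) /\ continuous (grad H).

Definition bil (R : realType) (n : nat) (u : 'cV[R]_n) (A : 'M[R]_n) (v : 'cV[R]_n) : R :=
  (u^T *m A *m v) 0 0.

Definition sym_posdef (R : realType) (n : nat) (A : 'M[R]_n) : Prop :=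
  A^T = A /\ (forall v : 'cV[R]_n, v != 0 -> 0 < bil v A v).

Definition discrete_gradient_pair (R : realType) (n : nat)
  (H : 'cV[R]_n -> R) (E : 'cV[R]_n -> 'M[R]_n) (z : 'cV[R]_n -> 'cV[R]_n)
  (Eb : 'cV[R]_n -> 'cV[R]_n -> 'M[R]_n) (zb : 'cV[R]_n -> 'cV[R]_n -> 'cV[R]_n) : Prop :=
  continuous (fun p : 'cV[R]_n * 'cV[R]_n => Eb p.1 p.2) /\
  continuous (fun p : 'cV[R]_n * 'cV[R]_n => zb p.1 p.2) /\
  (forall x, Eb x x = E x) /\
  (forall x, zb x x = z x) /\
  (forall x xh, bil (zb x xh) (Eb x xh) (xh - x) = H xh - H x).

Definition midpoint (R : realType) (n : nat) (x xh : 'cV[R]_n) : 'cV[R]_n :=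
  (2%:R^-1 : R) *: (xh + x).

Definition Ebar (R : realType) (n : nat) (E : 'cV[R]_n -> 'M[R]_n)
  (x xh : 'cV[R]_n) : 'M[R]_n := E (midpoint x xh).

Definition zbar (R : realType) (n : nat) (H : 'cV[R]_n -> R)
  (E : 'cV[R]_n -> 'M[R]_n) (z : 'cV[R]_n -> 'cV[R]_n)
  (x xh : 'cV[R]_n) : 'cV[R]_n :=
  if xh != x then
    z (midpoint x xh) +
    ((H xh - H x - bil (z (midpoint x xh)) (Ebar E x xh) (xh - x))
       / bil (xh - x) (Ebar E x xh) (xh - x)) *: (xh - x)
  else z x.

(* Main.v *)
Require Import Defs.
From HB Require Import structures.
From mathcomp Require Import all_boot all_order all_algebra.
From mathcomp Require Import all_classical all_reals all_analysis.
From mathcomp Require Import ring lra.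
Import Order.TTheory GRing.Theory Num.Theory.
Import numFieldNormedType.Exports.
Local Open Scope ring_scope.
Local Open Scope classical_set_scope.
Set Implicit Arguments. Unset Strict Implicit. Unset Printing Implicit Defensive.
Section S.
Variable R : realType.
Lemma entry_le m n (M : 'M[R]_(m,n)) i j : `|M i j| <= `|M|.
Proof.
rewrite [leRHS]/Num.norm /= mx_normrE.
by apply/bigmax_geP; right; exists (i, j).
Qed.
Lemma norm_le m n (M : 'M[R]_(m,n)) c : 0 <= c -> (forall i j, `|M i j| <= c) -> `|M| <= c.
Proof.
move=> c0 H; rewrite [leLHS]/Num.norm /= mx_normrE.
by apply: bigmax_le => // -[i j] _; apply: H.
Qed.
Lemma norm_tr m n (M : 'M[R]_(m,n)) : `|M^T| = `|M|.
Proof.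
apply/eqP; rewrite eq_le; apply/andP; split; apply: norm_le => // i j.
  by rewrite mxE; exact: entry_le.
by have := entry_le M^T j i; rewrite mxE.
Qed.
Lemma bil_expand n (u : 'cV[R]_n) A v :
  bil u A v = \sum_j \sum_i u i 0 * A i j * v j 0.
Proof.
rewrite /bil !mxE; apply: eq_bigr => j _; rewrite mxE big_distrl.
by apply: eq_bigr => i _; rewrite !mxE.
Qed.
Lemma bil_bound n (u : 'cV[R]_n) A v :
  `|bil u A v| <= (n * n)%:R * (`|u| * `|A| * `|v|).
Proof.
rewrite bil_expand; apply: le_trans (ler_norm_sum _ _ _) _.
apply: (@le_trans _ _ (\sum_(j<n) \sum_(i<n) (`|u| * `|A| * `|v|))).
  apply: ler_sum => j _; apply: le_trans (ler_norm_sum _ _ _) _.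
  apply: ler_sum => i _; rewrite !normrM.
  by rewrite !ler_pM ?entry_le // mulr_ge0.
by rewrite !sumr_const !card_ord -mulrnA mulr_natl.
Qed.
Lemma bilBl n (u w : 'cV[R]_n) A v : bil (u - w) A v = bil u A v - bil w A v.
Proof. rewrite !bil_expand -sumrB; apply: eq_bigr => j _; rewrite -sumrB; apply: eq_bigr => i _; rewrite !mxE; ring. Qed.
Lemma bilDm n (u : 'cV[R]_n) A B v : bil u (A + B) v = bil u A v + bil u B v.
Proof. by rewrite /bil mulmxDr mulmxDl mxE. Qed.
Lemma bilZ n (u : 'cV[R]_n) A v k : bil (k *: u) A (k *: v) = k * k * bil u A v.
Proof. rewrite !bil_expand mulr_sumr; apply: eq_bigr => j _; rewrite mulr_sumr; apply: eq_bigr => i _; rewrite !mxE; ring. Qed.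
Lemma bil0r n (u : 'cV[R]_n) A : bil u A 0 = 0.
Proof. by rewrite /bil mulmx0 mxE. Qed.
Lemma diff_grad n (H : 'cV[R]_n -> R) y d : 'd H y d = bil (grad H y) 1%:M d.
Proof.
rewrite /bil mulmx1 mxE.
rewrite {1}(matrix_sum_delta d) linear_sum /=.
apply: eq_bigr => j _; rewrite big_ord1 linearZ /= !mxE mulrC.
by congr (_ * _); rewrite (ord1 (ord0)).
Qed.
Lemma bil_grad n (A : 'M[R]_n) z g d : A^T *m z = g -> bil z A d = bil g 1%:M d.
Proof. by move<-; rewrite /bil mulmx1 trmx_mul trmxK. Qed.

Lemma bil_cont n (T : topologicalType) (u : T -> 'cV[R]_n) (A : T -> 'M[R]_n) v t :
  {for t, continuous u} -> {for t, continuous A} -> {for t, continuous v} ->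
  {for t, continuous (fun s => bil (u s) (A s) (v s))}.
Proof.
move=> cu cA cv.
rewrite (_ : (fun s => _) = (fun s => \sum_j \sum_i u s i 0 * A s i j * v s j 0)); last first.
  by apply/funext => s; rewrite bil_expand.
apply: cvg_big => // [|j _]; first exact: add_continuous.
apply: cvg_big => // [|i _]; first exact: add_continuous.
apply: cvgM; first apply: cvgM.
- exact: (continuous_comp cu (@coord_continuous _ _ _ i 0 _)).
- exact: (continuous_comp cA (@coord_continuous _ _ _ i j _)).
- exact: (continuous_comp cv (@coord_continuous _ _ _ j 0 _)).
Qed.
Lemma trmx_cont m k : continuous (fun r : 'M[R]_(m,k) => r^T).
Proof.
move=> r; apply/(@cvgrPdist_lt _ _ _ (nbhs r) (nbhs_filter r)) => e e0.
near=> s; rewrite -linearB /= norm_tr.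
near: s; exact: cvgr_dist_lt.
Unshelve. all: by end_near. Qed.

Lemma posdef_lb n (A : 'M[R]_n) : (forall v, v != 0 -> 0 < bil v A v) ->
  exists2 c, 0 < c & forall d, c * `|d| ^+ 2 <= bil d A d.
Proof.
move=> pd.
pose S := [set r : 'rV[R]_n | `|r| = 1].
pose f := fun r : 'rV[R]_n => bil r^T A r^T.
have key : forall d : 'cV[R]_n, d != 0 -> S ((`|d|^-1 *: d)^T) /\
    f ((`|d|^-1 *: d)^T) = `|d|^-1 * `|d|^-1 * bil d A d.
  move=> d d0; have nd : `|d| != 0 by rewrite normr_eq0.
  split; first by rewrite /S /= norm_tr normrZ normrV ?unitfE // normr_id mulVf.
  by rewrite /f trmxK bilZ.
case: (pselect (S !=set0)) => [S0|S0]; last first.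
  exists 1 => // d; have [->|d0] := eqVneq d 0.
    by rewrite normr0 expr0n mul1r bil0r.
  by exfalso; apply: S0; exists (`|d|^-1 *: d)^T; case: (key d d0).
have cS : compact S.
  apply: bounded_closed_compact.
    rewrite /bounded_near; exists 1; split; first by rewrite num_real.
    by move=> M M1 x /= ->; exact: ltW.
  have -> : S = (fun r : 'rV[R]_n => `|r|) @^-1` [set (1:R)] by [].
  apply: preimage_closed; first by move=> x _; exact: norm_continuous.
  exact: closed_eq.
have cf : {within S, continuous f}.
  apply: continuous_subspaceT => r.
  apply: (@bil_cont n (_ : topologicalType) (fun r : 'rV[R]_n => r^T) (fun _ => A) (fun r => r^T)).
  - exact: trmx_cont.
  - exact: cst_continuous.
  - exact: (@trmx_cont 1 n r).
have [c /set_mem Sc cmin] := compact_EVT_min S0 cS cf.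
have c0 : 0 < f c.
  apply: pd; apply/eqP => /(congr1 trmx); rewrite trmxK linear0 => c0.
  by move: Sc; rewrite /S /= c0 normr0 => /esym/eqP; rewrite oner_eq0.
exists (f c) => // d; have [->|d0] := eqVneq d 0.
  by rewrite normr0 expr0n mulr0 bil0r.
have [Sd fd] := key d d0.
have := cmin _ (mem_set Sd); rewrite fd.
have nd : 0 < `|d| by rewrite normr_gt0.
move=> h; apply: le_trans (ler_wpM2r (exprn_ge0 2 (ltW nd)) h) _.
have -> : `|d|^-1 / `|d| * bil d A d * `|d| ^+ 2 = bil d A d.
  by field; rewrite gt_eqF.
done.
Qed.
Lemma mvt_H n (H : 'cV[R]_n -> R) x d : (forall y, differentiable H y) ->
  exists2 t : R, t \in `[0, 1]%R & H (x + d) - H x = 'd H (x + t *: d) d.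
Proof.
move=> dH.
pose g := fun t : R => H (x + t *: d).
have gd : forall t, derivable g t 1 /\ 'D_1 g t = 'd H (x + t *: d) d.
  move=> t.
  have E : (fun h : R => h^-1 *: ((g \o shift t) (h *: 1) - g t)) =
           (fun h : R => h^-1 *: ((H \o shift (x + t *: d)) (h *: d) - H (x + t *: d))).
    apply/funext => h; rewrite /g /= /shift /=.
    by congr (_ *: (H _ - _)); rewrite -[h%:A]/(h * 1) mulr1 scalerDl addrCA.
  split; first by rewrite /derivable E; exact: diff_derivable.
  by rewrite /derive E -/(derive H _ d) deriveE.
have [t t01 ht] := @MVT_segment R g (fun t => 'd H (x + t *: d) d) 0 1 ler01
  (fun t _ => (let: conj a b := gd t in DeriveDef a b))
  (derivable_within_continuous (fun t _ => (gd t).1)).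
exists t => //; move: ht; rewrite /g scale1r scale0r addr0 subr0 mulr1 => ->.
done.
Qed.
Lemma unif_lb n (E : 'cV[R]_n -> 'M[R]_n) x0 : {for x0, continuous E} ->
  (forall v, v != 0 -> 0 < bil v (E x0) v) ->
  exists2 c, 0 < c & \forall m \near x0, forall d, c * `|d| ^+ 2 <= bil d (E m) d.
Proof.
move=> cE pd; have [c0 c00 hc0] := posdef_lb pd.
pose K : R := (n * n)%:R.
have K0 : 0 <= K by [].
exists (c0 / 2); first by rewrite divr_gt0.
have ep : 0 < c0 / (2 * (K + 1)) by rewrite divr_gt0 // mulr_gt0 // ltr_wpDl.
have := cvgr_dist_lt _ _ cE _ ep; move=> /(_ (nbhs_filter x0)); apply: filterS => m hm d.
have -> : E m = E x0 + (E m - E x0) by rewrite addrC subrK.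
rewrite bilDm.
have hb := bil_bound d (E m - E x0) d.
have h1 : `|E m - E x0| <= c0 / (2 * (K + 1)) by rewrite distrC ltW.
have h2 : K * (`|d| * `|E m - E x0| * `|d|) <= c0 / 2 * `|d| ^+ 2.
  have -> : K * (`|d| * `|E m - E x0| * `|d|) = (K * `|E m - E x0|) * `|d| ^+ 2.
    by rewrite expr2; ring.
  apply: ler_wpM2r; first exact: exprn_ge0.
  apply: le_trans (ler_wpM2l K0 h1) _.
  have -> : K * (c0 / (2 * (K + 1))) = c0 / 2 - c0 / (2 * (K + 1)).
    by field; rewrite gt_eqF // ltr_wpDl.
  lra.
have := hc0 d; move: hb h2; rewrite -/K.
set a := bil d (E x0) d; set b := bil d (E m - E x0) d.
move=> /ler_normlP [hb1 _] h2 ha.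
have : c0 * `|d| ^+ 2 = c0 / 2 * `|d| ^+ 2 + c0 / 2 * `|d| ^+ 2.
  by rewrite -mulrDl -splitr.
lra.
Qed.
Lemma fst_cont n (q : 'cV[R]_n * 'cV[R]_n) : {for q, continuous fst}.
Proof. exact: cvg_fst. Qed.
Lemma snd_cont n (q : 'cV[R]_n * 'cV[R]_n) : {for q, continuous snd}.
Proof. exact: cvg_snd. Qed.
Lemma dif_cont n (q : 'cV[R]_n * 'cV[R]_n) : {for q, continuous (fun q : 'cV[R]_n * 'cV[R]_n => q.2 - q.1)}.
Proof. have h := continuousB (@snd_cont n q) (@fst_cont n q). exact h. Qed.
Lemma mid_cont n : continuous (fun q : 'cV[R]_n * 'cV[R]_n => midpoint q.1 q.2).
Proof.
move=> q; rewrite /midpoint.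
have h := continuousZl_tmp (k := (2^-1 : R)) (continuousD (@snd_cont n q) (@fst_cont n q)). exact h.
Qed.
Lemma midxx n (x : 'cV[R]_n) : midpoint x x = x.
Proof. by apply/matrixP => i j; rewrite !mxE; field. Qed.
Lemma mid_conv n (a b : 'cV[R]_n) : midpoint a b = a + 2^-1 *: (b - a).
Proof. by apply/matrixP => i j; rewrite !mxE; field. Qed.
Lemma ball_conv n (x0 a b : 'cV[R]_n) (del t : R) : 0 <= t -> t <= 1 ->
  `|x0 - a| < del -> `|x0 - b| < del -> `|x0 - (a + t *: (b - a))| < del.
Proof.
move=> t0 t1 ha hb.
have -> : x0 - (a + t *: (b - a)) = (1 - t) *: (x0 - a) + t *: (x0 - b).
  by apply/matrixP => i j; rewrite !mxE; ring.
apply: le_lt_trans (ler_normD _ _) _.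
rewrite !normrZ !ger0_norm ?subr_ge0 //.
have A0 := normr_ge0 (x0 - a); have B0 := normr_ge0 (x0 - b).
have [th|th] := leP t (2^-1).
  have : 2^-1 * (del - `|x0 - a|) <= (1 - t) * (del - `|x0 - a|).
    by apply: ler_wpM2r; [rewrite subr_ge0 ltW | lra].
  nra.
nra.
Qed.
Lemma norm1mx n : `|(1%:M : 'M[R]_n)| <= 1.
Proof. by apply: norm_le => // i j; rewrite !mxE; case: (i == j); rewrite ?normr1 ?normr0. Qed.
Lemma norm_tri3 n (g0 g1 g2 : 'cV[R]_n) (e : R) :
  `|g0 - g1| < e -> `|g0 - g2| < e -> `|g1 - g2| <= 2 * e.
Proof.
move=> h1 h2.
have -> : g1 - g2 = (g0 - g2) - (g0 - g1) by apply/matrixP => i j; rewrite !mxE; ring.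
apply: le_trans (ler_normB _ _) _; rewrite mulr_natl mulr2n; exact: ltW (ltrD h2 h1).
Qed.

Definition corr n (H : 'cV[R]_n -> R) E z (q : 'cV[R]_n * 'cV[R]_n) : 'cV[R]_n :=
  ((H q.2 - H q.1 - bil (z (midpoint q.1 q.2)) (E (midpoint q.1 q.2)) (q.2 - q.1))
    / bil (q.2 - q.1) (E (midpoint q.1 q.2)) (q.2 - q.1)) *: (q.2 - q.1).

Lemma zbar_corr n (H : 'cV[R]_n -> R) E z q :
  zbar H E z q.1 q.2 = z (midpoint q.1 q.2) + corr H E z q.
Proof.
case: q => a b /=; rewrite /zbar /corr /=; case: ifPn => [//|/negPn/eqP ->].
by rewrite !subrr scaler0 addr0 midxx.
Qed.

Lemma corr_diag n (H : 'cV[R]_n -> R) E z :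
  (forall y, differentiable H y) -> continuous (grad H) ->
  (forall x, (E x)^T *m z x = grad H x) -> continuous E ->
  (forall x v, v != 0 -> 0 < bil v (E x) v) ->
  forall x0, {for (x0, x0), continuous (corr H E z)}.
Proof.
move=> dH cg hEz cE pd x0.
have c00 : corr H E z (x0, x0) = 0 by rewrite /corr /= !subrr scaler0.
have G : (corr H E z @ nbhs ((x0, x0) : 'cV[R]_n * 'cV[R]_n) --> corr H E z (x0, x0)) ; last exact G.
apply/cvgrPdist_le => e e0.
rewrite c00.
pose K : R := (n * n)%:R.
have K0 : 0 <= K by [].
have [c c0 hc] := unif_lb (cE x0) (pd x0).
pose eta := e * c / (2 * (K + 1)).
have eta0 : 0 < eta by rewrite /eta divr_gt0 ?mulr_gt0 // ltr_wpDl.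
have := cvgr_dist_lt _ _ (cg x0) _ eta0; move=> /(_ (nbhs_filter x0)) hg.
have hP := @filterI _ (nbhs x0) (nbhs_filter x0) _ _ hg hc.
have [del del0 hdel] := iffLR (nbhs_ballP _ _) hP.
apply/nbhs_ballP; exists del => //; case=> a b [/= ha hb].
have ha' : `|x0 - a| < del by move: ha; rewrite -ball_normE.
have hb' : `|x0 - b| < del by move: hb; rewrite -ball_normE.
have Pin : forall t, 0 <= t -> t <= 1 -> 
    `|grad H x0 - grad H (a + t *: (b - a))| < eta /\ forall d, c * `|d| ^+ 2 <= bil d (E (a + t *: (b - a))) d.
  move=> t t0 t1; apply: hdel; rewrite -ball_normE /=; exact: ball_conv.
rewrite sub0r normrN /corr /= mid_conv.
set d := b - a.
have [->|dn0] := eqVneq d 0; first by rewrite scaler0 normr0 ltW.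
have [t t01 ht] := mvt_H a d dH.
have hab : a + d = b by rewrite /d addrC subrK.
rewrite hab in ht; rewrite ht.
move: t01; rewrite in_itv /= => /andP [t0 t1].
have [gy _] := Pin t t0 t1.
have h20 : (0:R) <= 2^-1 by rewrite invr_ge0.
have h21 : (2^-1 : R) <= 1 by rewrite invf_le1 // ler1n.
have [gm hD] := Pin 2^-1 h20 h21.
set y := a + t *: d in gy ht *.
set m := a + 2^-1 *: d in gm hD *.
rewrite diff_grad (bil_grad _ (hEz m)) -bilBl.
set N := bil _ _ _.
set D := bil d (E m) d.
have nd : 0 < `|d| by rewrite normr_gt0.
have hD' : c * `|d| ^+ 2 <= D := hD d.
have D0 : 0 < D by apply: lt_le_trans hD'; rewrite mulr_gt0 // exprn_gt0.
have hgg := norm_tri3 gy gm.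
have hN : `|N| <= K * (2 * eta * `|d|).
  apply: le_trans (bil_bound _ _ _) _; rewrite -/K; apply: ler_wpM2l => //.
  apply: le_trans (ler_wpM2r (normr_ge0 d) (ler_wpM2l (normr_ge0 _) (@norm1mx n))) _.
  by rewrite mulr1 ler_wpM2r.
have hKe : 2 * K * eta <= e * c.
  have -> : 2 * K * eta = e * c - e * c / (K + 1).
    by rewrite /eta; field; rewrite gt_eqF // ltr_wpDl.
  by rewrite lerBlDr lerDl divr_ge0 // ?mulr_ge0 ?ltW // ltr_wpDl.
rewrite normrZ normrM normfV (ger0_norm (ltW D0)) mulrAC ler_pdivrMr //.
have h1 : `|N| * `|d| <= K * (2 * eta * `|d|) * `|d| by apply: ler_wpM2r => //; exact: ltW.
apply: le_trans h1 _.
have -> : K * (2 * eta * `|d|) * `|d| = (2 * K * eta) * `|d| ^+ 2 by rewrite expr2; ring.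
apply: le_trans (ler_wpM2r (exprn_ge0 2 (ltW nd)) hKe) _.
by rewrite -mulrA ler_wpM2l // ltW.
Qed.
Lemma bilDZl n (u d : 'cV[R]_n) A v k : bil (u + k *: d) A v = bil u A v + k * bil d A v.
Proof.
rewrite !bil_expand mulr_sumr -big_split; apply: eq_bigr => j _.
rewrite mulr_sumr -big_split; apply: eq_bigr => i _; rewrite !mxE /=; ring.
Qed.

Lemma corr_off n (H : 'cV[R]_n -> R) E z (p : 'cV[R]_n * 'cV[R]_n) :
  (forall y, differentiable H y) -> continuous E -> continuous z ->
  bil (p.2 - p.1) (E (midpoint p.1 p.2)) (p.2 - p.1) != 0 ->
  {for p, continuous (corr H E z)}.
Proof.
move=> dH cE cz D0.
have cH : continuous H by move=> y; exact: differentiable_continuous.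
have cEm : {for p, continuous (fun q : 'cV[R]_n * 'cV[R]_n => E (midpoint q.1 q.2))}.
  have h := continuous_comp (@mid_cont n p) (cE _); exact h.
have czm : {for p, continuous (fun q : 'cV[R]_n * 'cV[R]_n => z (midpoint q.1 q.2))}.
  have h := continuous_comp (@mid_cont n p) (cz _); exact h.
have cD := @bil_cont n _ (fun q : 'cV[R]_n * 'cV[R]_n => q.2 - q.1) (fun q => E (midpoint q.1 q.2)) (fun q => q.2 - q.1) p (@dif_cont n p) cEm (@dif_cont n p).
have cN1 : {for p, continuous (fun q : 'cV[R]_n * 'cV[R]_n => H q.2 - H q.1)}.
  have h := continuousB (continuous_comp (@snd_cont n p) (cH _))
                        (continuous_comp (@fst_cont n p) (cH _)).
  exact h.
have cN := continuousB cN1 (@bil_cont n _ (fun q : 'cV[R]_n * 'cV[R]_n => z (midpoint q.1 q.2)) (fun q => E (midpoint q.1 q.2)) (fun q => q.2 - q.1) p czm cEm (@dif_cont n p)).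
have h := continuousZ (continuousM cN (continuousV (s := fun q : 'cV[R]_n * 'cV[R]_n => bil (q.2 - q.1) (E (midpoint q.1 q.2)) (q.2 - q.1)) (x := p) D0 cD)) (@dif_cont n p).
exact h.
Qed.
End S.

Theorem theorem1 (R : realType) (n : nat) (H : 'cV[R]_n -> R)
  (E : 'cV[R]_n -> 'M[R]_n) (z : 'cV[R]_n -> 'cV[R]_n) :
  C1 H -> continuous E -> continuous z ->
  (forall x, (E x)^T *m z x = grad H x) ->
  (forall x, sym_posdef (E x)) ->
  discrete_gradient_pair H E z (Ebar E) (zbar H E z).
Proof.
move=> [dH cg] cE cz hEz hP.
have pd : forall x v, v != 0 -> 0 < bil v (E x) v by move=> x v; exact: (hP x).2.
split; [|split; [|split; [|split]]].
- move=> p; have h := continuous_comp (@mid_cont R n p) (cE _); exact h.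
- have -> : (fun p : 'cV[R]_n * 'cV[R]_n => zbar H E z p.1 p.2) =
            (fun p => z (midpoint p.1 p.2) + corr H E z p).
    by apply/funext => p; exact: zbar_corr.
  have cc : forall q : 'cV[R]_n * 'cV[R]_n, {for q, continuous (corr H E z)}.
    case=> a b; have [->|ne] := eqVneq b a; first exact: corr_diag.
    apply: corr_off => //=; rewrite gt_eqF // pd // subr_eq0.
    exact: ne.
  move=> p; have czm := continuous_comp (@mid_cont R n p) (cz _).
  have h := continuousD czm (cc p); exact h.
- by move=> x; rewrite /Ebar midxx.
- by move=> x; rewrite /zbar eqxx.
- move=> x xh; have := zbar_corr H E z (x, xh); rewrite /= => ->.
  rewrite /corr /= /Ebar bilDZl.
  have [->|ne] := eqVneq xh x; first by rewrite !subrr !bil0r mulr0 addr0.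
  have D0 : bil (xh - x) (E (midpoint x xh)) (xh - x) != 0.
    by rewrite gt_eqF // pd // subr_eq0.
  by rewrite divfK // addrC subrK.
Qed.
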